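(* In the standing setting, the map $g:Q\to Q'$ satisfies the analogues of (D), (U), (S): (D2) for all $A',B'\in Q'$ with $B'\subseteq A'$ and every $A\in Q$ with $g(A)=A'$, there exists $B\in Q$ with $g(B)=B'$ and $B\subseteq A$; (U2) for all $A',B'\in Q'$ with $B'\subseteq A'$ and every $B\in Q$ with $g(B)=B'$, there exists $A\in Q$ with $g(A)=A'$ and $B\subseteq A$; (S2) for all $A,B,C\in Q$, if $C\subseteq B\subseteq A$ and $g(C)=g(A)$, then $g(B)=g(A)$.
   Context: Standing setting: $(P,\preceq)$ is a finite poset with a bottom and a top element; $f:P\to P'$ is a surjective map onto $P'=f(P)$; $f^{-1}(a')=\{a\in P: f(a)=a'\}$; the relation $\preceq'$ on $P'$ is defined by $b'\preceq' a'$ iff there exist $a\in f^{-1}(a')$, $b\in f^{-1}(b')$ with $b\preceq a$. Assume the three conditions: (D) for all $a',b'\in P'$ with $b'\preceq' a'$ and every $a\in f^{-1}(a')$ there is $b\in f^{-1}(b')$ with $b\preceq a$; (U) for all $a',b'\in P'$ with $b'\preceq' a'$ and every $b\in f^{-1}(b')$ there is $a\in f^{-1}(a')$ with $b\preceq a$; (S) for all $a,b,c\in P$, if $c\preceq b\preceq a$ and $f(c)=f(a)$ then $f(b)=f(a)$. (Then $(P',\preceq')$ is a poset.) A down-set of a poset is a subset $A$ such that $a\in A$ and $b\preceq a$ imply $b\in A$. $Q$ is the set of nonempty down-sets of $(P,\preceq)$ and $Q'$ the set of nonempty down-sets of $(P',\preceq')$, each ordered by inclusion. $g:2^P\to 2^{P'}$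 is $g(A)=\{f(a):a\in A\}$. *)

(* Defs.v *)
From mathcomp Require Import all_boot.
Set Implicit Arguments. Unset Strict Implicit. Unset Printing Implicit Defensive.

Definition partial_order (T : finType) (le : rel T) : Prop :=
  [/\ reflexive le, antisymmetric le & transitive le].

Definition is_bottom (T : finType) (le : rel T) (x : T) := forall y, le x y.
Definition is_top (T : finType) (le : rel T) (x : T) := forall y, le y x.

Definition lift_le (T T' : finType) (f : T -> T') (le : rel T) : rel T' :=
  fun b' a' => [exists a, exists b, [&& f a == a', f b == b' & le b a]].

Definition cond_D (T T' : finType) (f : T -> T') (le : rel T) : Prop :=
  forall a' b' : T', lift_le f le b' a' ->
    forall a, f a = a' -> exists b, f b = b' /\ le b a.
Definition cond_U (T T' : finType) (f : T -> T') (le : rel T) : Prop :=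
  forall a' b' : T', lift_le f le b' a' ->
    forall b, f b = b' -> exists a, f a = a' /\ le b a.
Definition cond_S (T T' : finType) (f : T -> T') (le : rel T) : Prop :=
  forall a b c : T, le c b -> le b a -> f c = f a -> f b = f a.

Definition down_set (T : finType) (le : rel T) (A : {set T}) : Prop :=
  forall a b, a \in A -> le b a -> b \in A.
Definition in_Q (T : finType) (le : rel T) (A : {set T}) : Prop :=
  A != set0 /\ down_set le A.

Definition gmap (T T' : finType) (f : T -> T') (A : {set T}) : {set T'} := f @: A.

(* Main.v *)
Require Import Defs.
From mathcomp Require Import all_boot.

Theorem lemma6 (T T' : finType) (le : rel T) (f : T -> T')
  (Hpo : partial_order le)
  (Hbot : exists x0, is_bottom le x0) (Htop : exists x1, is_top le x1)
  (Hsurj : forall a' : T', exists a, f a = a')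
  (HD : cond_D f le) (HU : cond_U f le) (HS : cond_S f le) :
  (* (D2) *)
  (forall A' B' : {set T'}, in_Q (lift_le f le) A' -> in_Q (lift_le f le) B' ->
     B' \subset A' ->
     forall A : {set T}, in_Q le A -> gmap f A = A' ->
       exists B : {set T}, [/\ in_Q le B, gmap f B = B' & B \subset A])
  /\
  (* (U2) *)
  (forall A' B' : {set T'}, in_Q (lift_le f le) A' -> in_Q (lift_le f le) B' ->
     B' \subset A' ->
     forall B : {set T}, in_Q le B -> gmap f B = B' ->
       exists A : {set T}, [/\ in_Q le A, gmap f A = A' & B \subset A])
  /\
  (* (S2) *)
  (forall A B C : {set T}, in_Q le A -> in_Q le B -> in_Q le C ->
     C \subset B -> B \subset A -> gmap f C = gmap f A -> gmap f B = gmap f A).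
Proof.
have liftP : forall a b, le b a -> lift_le f le (f b) (f a).
  move=> a b Hba; apply/existsP; exists a; apply/existsP; exists b.
  by rewrite !eqxx Hba.
split; [|split].
- move=> A' B' [nA' dA'] [nB' dB'] sBA A [nA dA] gA.
  exists (A :&: f @^-1: B'); split.
  + split.
    * case/set0Pn: nB' => b' Hb'.
      have : b' \in A' by apply: (subsetP sBA).
      rewrite -gA /gmap => /imsetP [a Ha Hab].
      by apply/set0Pn; exists a; rewrite inE Ha inE -Hab.
    * move=> a b; rewrite !inE => /andP [Ha Hfa] Hba.
      rewrite (dA a b Ha Hba) /=.
      exact: (dB' (f a) (f b) Hfa (liftP a b Hba)).
  + apply/setP => b'; apply/imsetP/idP.
    * by case=> a; rewrite !inE => /andP [_ H] ->.
    * move=> Hb'.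
      have : b' \in A' by apply: (subsetP sBA).
      rewrite -gA /gmap => /imsetP [a Ha Hab].
      by exists a => //; rewrite !inE Ha -Hab Hb'.
  + exact: subsetIl.
- move=> A' B' [nA' dA'] [nB' dB'] sBA B [nB dB] gB.
  exists (f @^-1: A'); split.
  + split.
    * case/set0Pn: nA' => a' Ha'.
      have [a Ha] := Hsurj a'.
      by apply/set0Pn; exists a; rewrite inE Ha.
    * move=> a b; rewrite !inE => Ha Hba.
      exact: (dA' (f a) (f b) Ha (liftP a b Hba)).
  + apply/setP => a'; apply/imsetP/idP.
    * by case=> a; rewrite !inE => H ->.
    * move=> Ha'; have [a Ha] := Hsurj a'.
      by exists a => //; rewrite inE Ha.
  + apply/subsetP => b Hb; rewrite inE; apply: (subsetP sBA).
    by rewrite -gB /gmap; apply/imsetP; exists b.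
- move=> A B C _ _ _ sCB sBA gCA.
  apply/eqP; rewrite eqEsubset; apply/andP; split.
  + exact: imsetS.
  + by rewrite -gCA; exact: imsetS.
Qed.
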